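(* Let $g\ge 1$, let $\mathfrak{m}_g$ be a rooted unicellular map of genus $g$, and let $\mathfrak{p}=((\mathfrak{m}_{g},\tau),(\mathfrak{m}_{g_1},\tau_1),\ldots,(\mathfrak{m}_{g_{r-1}},\tau_{r-1}),(\mathfrak{m}_0,\varnothing))$ be a blueprint of $\mathfrak{m}_g$ consisting of $r$ slicings. Then $1\le r\le g$, and the planar tree $\mathfrak{m}_0$ equipped with the induced vertex labels $(\sigma_v)_v$, $\sigma_v\in\mathbb{F}_2^r$ (defined in the context), is a $\lambda$-tree. In particular, $(\mathfrak{m}_g,\mathfrak{p})$ induces a unique $\lambda$-tree $\mathfrak{m}_0^{(\sigma_v)_v}$.
   Context: A rooted unicellular map with $m$ edges is given by permutations $\sigma$, $\alpha$ on the half-edge set $H=[2m]$, where $\alpha$ is a fixed-point-free involution (edges), the cycles of $\sigma$ are the vertices (with $\sigma$ encoding counterclockwise rotation around a vertex), and $\gamma=\alpha\circ\sigma$ has exactly one cycle (the boundary component); one half-edge is distinguished as the root. Its genus $g$ is given by $v-m+1=2-2g$, $v$ the number of vertices; genus $0$ means a rooted planar tree. The order $<_\gamma$ on half-edges is the order of appearance along the cycle $\gamma$ starting from the root; vertices are compared via their $<_\gamma$-minimal half-edges. A trisection is a half-edge $\tau$ with $\tau\le_\gamma\sigma^{-1}(\tau)$ which is not the $<_\gamma$-minimal half-edge of its vertex; a map of genus $g$ has exactly $2g$ trisections. Slicing (Chapuy, ''A new combinatorial identity for unicellular maps, via a direct bijective approach'', 2011): given a unicellular map $\mathfrak{m}$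 of genus $g'$ and a trisection $\tau$, Chapuy's slicing map $\Xi$ yields $\Xi(\mathfrak{m},\tau)=(\mathfrak{m}',v_1,\ldots,v_{2k+1})$, where $k\ge 1$, $\mathfrak{m}'$ is a unicellular map of genus $g'-k$, and $v_1,\ldots,v_{2k+1}$ are the vertices of $\mathfrak{m}'$ created by slicing the vertex of $\tau$, ordered by $<_\gamma$; $\Xi$ is a bijection whose inverse is the gluing map $\Lambda$. A blueprint of $(\mathfrak{m}_g,\tau)$ is a sequence $((\mathfrak{m}_{g},\tau),(\mathfrak{m}_{g_1},\tau_1),\ldots,(\mathfrak{m}_{g_{r-1}},\tau_{r-1}),(\mathfrak{m}_0,\varnothing))$ where each $\tau_i$ is a trisection of $\mathfrak{m}_{g_i}$ ($\mathfrak{m}_{g_0}=\mathfrak{m}_g,\tau_0=\tau$), $(\mathfrak{m}_{g_{i+1}},V_{i+1})=\Xi(\mathfrak{m}_{g_i},\tau_i)$ for $0\le i<r$ ($V_{i+1}$ the set of created vertices; this is the $(i+1)$-st slicing), and $\mathfrak{m}_{g_r}=\mathfrak{m}_0$ has genus $0$. A blueprint of $\mathfrak{m}_g$ is a blueprint of $(\mathfrak{m}_g,\tau)$ for some trisection $\tau$. Induced labels: a vertex of $\mathfrak{m}_0$ is involved in the $s$-th slicing if it is one of the vertices of $V_s$ or arises from one of them by later slicings. First give each vertex $v$ of $\mathfrak{m}_0$ the label $\sigma'_v\in\mathbb{F}_2^r$ whose $s$-th coordinate is $1$ iff $v$ is involved in the $s$-th slicing. Then reduce: for $i=r,r-1,\ldots,2$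 in turn, for every vertex $v$ with $\sigma_v|_i=1$ that is not the $<_\gamma$-minimal vertex among the vertices $u$ with $\sigma_u|_i=1$ (''regular at $i$''), set $\sigma_v|_h=0$ for all $h<i$; the resulting labels are $(\sigma_v)_v$. $\lambda$-tree: a rooted planar tree with boundary component $\gamma$ in which each vertex $v$ carries a label $\sigma_v\in\mathbb{F}_2^r$ such that (i) $\sum_{v,h}\sigma_v|_h=2g+r$ (counting the entries equal to $1$), where $1\le r\le g$; (ii) for each $h$, the number of vertices $v$ with $\sigma_v|_h=1$ is odd; (iii) for $h<i$, at most one vertex $v$ has $\sigma_v|_h=\sigma_v|_i=1$, and any such vertex is $<_\gamma$-minimal among all vertices $u$ with $\sigma_u|_i=1$. *)

(* Defs.v *)
From mathcomp Require Import all_boot all_fingroup.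
Set Implicit Arguments. Unset Strict Implicit. Unset Printing Implicit Defensive.

(* A (candidate) rooted map on the half-edge set H = 'I_n (n = 2m). *)
Record umap (n : nat) := UMap { sg : {perm 'I_n}; al : {perm 'I_n}; root : 'I_n }.

Section Maps.
Variable n : nat.
Implicit Types (M : umap n) (h : 'I_n).

(* gamma = alpha o sigma (apply sigma first); in mathcomp (s * t) x = t (s x) *)
Definition gamma M : {perm 'I_n} := (sg M * al M)%g.

Definition is_umap M : bool :=
  [&& [forall h, al M (al M h) == h], [forall h, al M h != h]
    & #|porbits (gamma M)| == 1].

(* v - m + 1 = 2 - 2g, with v = #vertices, m = n/2 edges *)
Definition genus M : nat := (n./2 + 1 - #|porbits (sg M)|)./2.

(* position along the tour gamma, starting at the root: defines <_gamma *)
Definition pos M h : nat := findex (gamma M) (root M) h.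

Definition is_vmin M h : bool :=
  [forall h' in porbit (sg M) h, pos M h <= pos M h'].

Definition trisection M h : bool :=
  (pos M h <= pos M ((sg M)^-1%g h)) && ~~ is_vmin M h.

(* key of a vertex (set of half-edges): position of its minimal half-edge;
   vertices are compared via these keys *)
Definition vkey M (v : {set 'I_n}) : nat := \big[minn/n]_(h in v) pos M h.

Definition vmin_set M (V : {set {set 'I_n}}) : {set 'I_n} :=
  [set h | (porbit (sg M) h \in V) && is_vmin M h].
Definition glue_seq M (V : {set {set 'I_n}}) : seq 'I_n :=
  sort (fun a b => pos M a <= pos M b) (enum (vmin_set M V)).

(* Chapuy's gluing Lambda(M', V) = (M, t): with a_1 <_gamma ... <_gamma a_{2k+1}
   the minimal half-edges of the glued vertices, sigma = sigma' o (a_1 ... a_{2k+1}),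
   same alpha and root, and the resulting trisection is a_{2k+1}. *)
Definition gluing M' (V : {set {set 'I_n}}) M (t : 'I_n) : Prop :=
  [/\ al M = al M', root M = root M',
      (forall x, sg M x = sg M' (next (glue_seq M' V) x))
    & t = last (root M') (glue_seq M' V)].

(* Xi(M, t) = (M', V) : the inverse of the gluing map *)
Definition slicing M (t : 'I_n) M' (V : {set {set 'I_n}}) : Prop :=
  [/\ is_umap M', V \subset porbits (sg M'), odd #|V| && (3 <= #|V|),
      genus M' + (#|V|).-1./2 = genus M
    & gluing M' V M t].

(* blueprint with r slicings: Ms 0 = M, (Ms i.+1, Vs i) = Xi(Ms i, ts i),
   (Vs i is the set V_{i+1} of created vertices), Ms r of genus 0 *)
Definition blueprint M (r : nat) (Ms : nat -> umap n) (ts : nat -> 'I_n)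
    (Vs : nat -> {set {set 'I_n}}) : Prop :=
  [/\ Ms 0 = M,
      (forall i, i < r -> trisection (Ms i) (ts i) /\
                          slicing (Ms i) (ts i) (Ms i.+1) (Vs i))
    & genus (Ms r) = 0].

(* labels: vertex (set of half-edges) -> coordinate h (1 <= h <= r) -> bit *)
Definition labeling := {set 'I_n} -> nat -> bool.

Definition min_at (T : umap n) (L : labeling) (i : nat) (u : {set 'I_n}) : bool :=
  [forall w in porbits (sg T), L w i ==> (vkey T u <= vkey T w)].

(* initial labels sigma'_v: v involved in slicing s iff v arises from a
   vertex of V_s, i.e. its half-edges lie in the union of V_s *)
Definition init_labels (r : nat) (Vs : nat -> {set {set 'I_n}}) : labeling :=
  fun u (s : nat) => (1 <= s <= r) && (u \subset cover (Vs s.-1)).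

Definition red_step (T : umap n) (i : nat) (L : labeling) : labeling :=
  fun u (s : nat) => if [&& s < i, L u i & ~~ min_at T L i u] then false else L u s.

Definition induced_labels (T : umap n) (r : nat) (Vs : nat -> {set {set 'I_n}})
  : labeling :=
  foldl (fun L i => red_step T i L) (init_labels r Vs) (rev (iota 2 r.-1)).

Definition lambda_tree (g r : nat) (T : umap n) (L : labeling) : Prop :=
  [/\ is_umap T /\ genus T = 0,
      1 <= r <= g,
      \sum_(v in porbits (sg T)) \sum_(1 <= s < r.+1) (L v s : nat) = 2 * g + r,
      (forall s : nat, 1 <= s <= r -> odd #|[set v in porbits (sg T) | L v s]|)
    & (forall s i : nat, 1 <= s -> s < i -> i <= r ->
         #|[set v in porbits (sg T) | L v s && L v i]| <= 1 /\
         (forall v, v \in porbits (sg T) -> L v s -> L v i -> min_at T L i v))].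

End Maps.

(* Main.v *)
Require Import Defs.
From mathcomp Require Import all_boot all_fingroup.
From mathcomp Require Import zify.
Set Implicit Arguments. Unset Strict Implicit. Unset Printing Implicit Defensive.

Section Glue.
Variable T : finType.
Variables (s s' : {perm T}) (c : seq T).
Hypothesis Uc : uniq c.
Hypothesis Hs : forall x, s x = s' (next c x).
Hypothesis Hd : forall a b, a \in c -> b \in c -> b \in porbit s' a -> a = b.

Lemma notin_next x : x \notin c -> next c x = x.
Proof. by move=> H; rewrite next_nth (negbTE H). Qed.

Lemma glueA1 x : (forall a, a \in c -> x \notin porbit s' a) ->
  porbit s x = porbit s' x.
Proof.
move=> Hx.
have It : forall i, iter i s x = iter i s' x.
  elim=> [|i IH] //=; rewrite IH Hs notin_next //.
  apply/negP=> Hc; move: (Hx _ Hc); rewrite porbit_sym -permX mem_porbit //.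
apply/setP=> y; apply/porbitP/porbitP=> -[i ->]; exists i; by rewrite !permX It.
Qed.

Lemma glue_key a : a \in c -> porbit s' a \subset porbit s (s' a).
Proof.
move=> ac.
set L := #|porbit s' a|.
have L0 : 0 < L by rewrite lt0n card_porbit_neq0.
have Hi : forall i, i < L -> iter i s (s' a) = iter i.+1 s' a.
  elim=> [|i IH] Hi //=.
  rewrite IH ?(ltnW Hi) // Hs notin_next //.
  apply/negP=> bc.
  have E := Hd ac bc (etrans (congr1 (fun z => z \in porbit s' a) (esym (permX s' a i.+1))) (mem_porbit _ _ _)).
  have := uniq_traject_porbit s' a; rewrite -/L.
  move/(nth_uniq a) => U.
  have := U 0 i.+1; rewrite !size_traject !nth_traject //=.
  by rewrite -[s' (iter i s' a)]/(iter i.+1 s' a) -E eqxx => /(_ L0 Hi).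
apply/subsetP=> y; rewrite porbit_traject => /trajectP[j jL ->].
case: j jL => [|i] iL.
  rewrite /= -{1}(iter_porbit s' a) -/L -(prednK L0) -Hi ?prednK // -permX.
  exact: mem_porbit.
by rewrite -Hi ?(ltnW iL) // -permX mem_porbit.
Qed.

Lemma glue_prev a : a \in c -> porbit s a = porbit s (prev c a) /\ porbit s' a \subset porbit s a.
Proof.
move=> ac.
have E : s (prev c a) = s' a by rewrite Hs next_prev.
have E1 : porbit s (s' a) = porbit s (prev c a).
  by apply/eqP; rewrite eq_porbit_mem -E -(expg1 s) mem_porbit.
have aP : a \in porbit s (s' a) by apply: (subsetP (glue_key ac)); exact: porbit_id.
have E2 : porbit s a = porbit s (s' a) by apply/eqP; rewrite eq_porbit_mem.
split; first by rewrite E2 E1.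
by rewrite E2; exact: glue_key.
Qed.

Lemma glue_same a b : a \in c -> b \in c -> porbit s a = porbit s b.
Proof.
case Ec: c => [//|a0 c'].
have H : forall i, i < size c -> porbit s (nth a0 c i) = porbit s a0.
  elim=> [|i IH] Hi; first by rewrite Ec.
  have ic : nth a0 c i \in c by rewrite mem_nth // ltnW.
  have En : next c (nth a0 c i) = nth a0 c i.+1.
    have Ei : index (nth a0 c i) c = i by rewrite index_uniq // ltnW.
    by rewrite next_nth ic Ei Ec.
  have ic1 : nth a0 c i.+1 \in c by rewrite mem_nth.
  have [E _] := glue_prev ic1.
  by rewrite E -En prev_next // IH // ltnW.
rewrite -Ec => ac bc; rewrite -(nth_index a0 ac) -(nth_index a0 bc) !H ?index_mem //.
Qed.

Definition Wset := [set y | has (fun a => y \in porbit s' a) c].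

Lemma glueA2 x : x \in Wset -> porbit s x = Wset.
Proof.
rewrite inE => /hasP[a ac xa].
have [_ S] := glue_prev ac.
have E : porbit s x = porbit s a by apply/eqP; rewrite eq_porbit_mem (subsetP S).
apply/setP=> y; apply/idP/idP.
  move=> yx; apply/negPn/negP => yW.
  have H1 : porbit s y = porbit s' y.
    apply: glueA1 => b bc; apply/negP=> yb; move: yW; rewrite inE.
    by apply/negP/negPn/hasP; exists b.
  have : x \in porbit s' y by rewrite -H1 porbit_sym.
  rewrite porbit_sym => yx'.
  move: yW; rewrite inE => /negP; apply; apply/hasP; exists a => //.
  by rewrite -(eqP (_ : porbit s' x == porbit s' a)) // eq_porbit_mem.
rewrite inE => /hasP[b bc yb]; rewrite E (glue_same ac bc).
have [_ S'] := glue_prev bc; exact: (subsetP S').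
Qed.

End Glue.


Section B.
Variable n : nat.
Implicit Types (M : umap n).

Lemma umap_conn M h : is_umap M -> fconnect (gamma M) (Defs.root M) h.
Proof.
case/and3P=> _ _ /eqP H1.
have E : porbit (gamma M) h = porbit (gamma M) (Defs.root M).
  have /card_le1_eqP := (eq_leq H1 : #|porbits (gamma M)| <= 1).
  by apply; rewrite imset_f.
have : h \in porbit (gamma M) (Defs.root M) by rewrite -E porbit_id.
by case/porbitP=> i ->; rewrite permX fconnect_iter.
Qed.

Lemma pos_inj M h1 h2 : is_umap M -> pos M h1 = pos M h2 -> h1 = h2.
Proof.
move=> U E; rewrite -(iter_findex (umap_conn h1 U)) -(iter_findex (umap_conn h2 U)).
by rewrite -/(pos M h1) E.
Qed.

Lemma pos_le M h : is_umap M -> pos M h <= n.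
Proof.
move=> U; apply: ltnW; apply: leq_trans (findex_max (umap_conn h U)) _.
by rewrite /fingraph.order; apply: leq_trans (max_card _) _; rewrite card_ord.
Qed.

Lemma bigmin_le (I : eqType) (s : seq I) (P : pred I) (F : I -> nat) x m :
  x \in s -> P x -> \big[minn/m]_(i <- s | P i) F i <= F x.
Proof.
move=> + Px; elim: s => [//|y s IH]; rewrite inE big_cons => /orP[/eqP<-|xs].
  by rewrite Px geq_minl.
case: (P y); last exact: IH.
exact: leq_trans (geq_minr _ _) (IH xs).
Qed.

Lemma vkey_spec M (v : {set 'I_n}) h : is_umap M -> h \in v -> exists2 h0, h0 \in v & (vkey M v = pos M h0 /\ pos M h0 <= pos M h).
Proof.
move=> U hv.
case: (arg_minnP (pos M) hv) => h0 h0v Hm.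
exists h0 => //; split; last exact: Hm.
apply/eqP; rewrite eqn_leq; apply/andP; split.
  by rewrite /vkey; apply: bigmin_le; rewrite ?mem_index_enum.
rewrite /vkey; elim/big_ind: _ => //.
- exact: pos_le.
- by move=> x y Hx Hy; rewrite leq_min Hx Hy.
Qed.

Lemma vkey_inj M u v : is_umap M -> u \in porbits (sg M) -> v \in porbits (sg M) ->
  vkey M u = vkey M v -> u = v.
Proof.
move=> U /imsetP[x _ ->] /imsetP[y _ ->] E.
have [h1 h1u [E1 _]] := vkey_spec U (porbit_id (sg M) x).
have [h2 h2v [E2 _]] := vkey_spec U (porbit_id (sg M) y).
have e : h1 = h2 by apply: (pos_inj U); rewrite -E1 -E2.
subst h2.
by apply/eqP; rewrite eq_porbit_mem -(eqP (_ : porbit (sg M) h1 == porbit (sg M) y)) ?eq_porbit_mem // porbit_sym.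
Qed.

End B.


Section C.
Variable n : nat.
Implicit Types (M : umap n).

Lemma mem_cover_porbit (s : {perm 'I_n}) (V : {set {set 'I_n}}) y :
  V \subset porbits s -> (y \in cover V) = (porbit s y \in V).
Proof.
move=> sV; apply/bigcupP/idP => [[B BV yB]|yV]; last by exists (porbit s y) => //; exact: porbit_id.
have /imsetP[z _ Bz] := subsetP sV _ BV.
suff -> : porbit s y = B by [].
by rewrite Bz; apply/eqP; rewrite eq_porbit_mem -Bz.
Qed.

Lemma slice_porbit M M' (t : 'I_n) (V : {set {set 'I_n}}) : is_umap M' -> V \subset porbits (sg M') ->
  gluing M' V M t -> forall x,
  porbit (sg M) x = if porbit (sg M') x \in V then cover V else porbit (sg M') x.
Proof.
move=> U sV [_ _ Hs _] x.
set s := sg M; set s' := sg M'; set c := glue_seq M' V.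
have Uc : uniq c by rewrite sort_uniq enum_uniq.
have memc h : (h \in c) = (porbit s' h \in V) && is_vmin M' h.
  by rewrite mem_sort mem_enum inE.
have Hd : forall a b, a \in c -> b \in c -> b \in porbit s' a -> a = b.
  move=> a b; rewrite !memc => /andP[_ /forallP Ha] /andP[_ /forallP Hb] ba.
  apply: (pos_inj U); apply/eqP; rewrite eqn_leq.
  move: (Ha b) (Hb a); rewrite ba porbit_sym ba /= => -> ->.
  done.
have HW : forall y, (y \in Wset s' c) = (porbit s' y \in V).
  move=> y; rewrite inE; apply/hasP/idP => [[a ac ya]|yV].
    move: ac; rewrite memc => /andP[aV _].
    by rewrite (eqP (_ : porbit s' y == porbit s' a)) // eq_porbit_mem.
  case: (arg_minnP (pos M') (porbit_id s' y)) => h0 h0v Hm.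
  have E : porbit s' h0 = porbit s' y by apply/eqP; rewrite eq_porbit_mem.
  exists h0; last by rewrite porbit_sym.
  rewrite memc E yV /=; apply/forallP => h'; apply/implyP; rewrite E; exact: Hm.
case: ifP => xV.
  have xW : x \in Wset s' c by rewrite HW.
  rewrite (glueA2 Uc Hs Hd xW); apply/setP=> y.
  by rewrite HW (mem_cover_porbit _ sV).
apply: (glueA1 Hs) => a ac; apply/negP => xa.
move: ac; rewrite memc => /andP[aV _].
by move: xV; rewrite (eqP (_ : porbit s' x == porbit s' a)) ?aV // eq_porbit_mem.
Qed.

End C.


Section D.
Variables (n r : nat) (Ms : nat -> umap n) (ts : nat -> 'I_n)
  (Vs : nat -> {set {set 'I_n}}).
Hypothesis HU0 : is_umap (Ms 0).
Hypothesis HB : forall i, i < r -> trisection (Ms i) (ts i) /\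
                          slicing (Ms i) (ts i) (Ms i.+1) (Vs i).

Let ps i x := porbit (sg (Ms i)) x.
Let P i := porbits (sg (Ms i)).
Let T := Ms r.

Lemma HU i : i <= r -> is_umap (Ms i).
Proof. case: i => [//|i] ir; by have [_ []] := HB ir. Qed.

Lemma HsV i : i < r -> Vs i \subset P i.+1.
Proof. by move=> ir; have [_ [_ ? _ _ _]] := HB ir. Qed.

Lemma Hcard i : i < r -> odd #|Vs i| && (3 <= #|Vs i|).
Proof. by move=> ir; have [_ [_ _ ? _ _]] := HB ir. Qed.

Lemma Hgen i : i < r -> genus (Ms i.+1) + (#|Vs i|).-1./2 = genus (Ms i).
Proof. by move=> ir; have [_ [_ _ _ ? _]] := HB ir. Qed.

Lemma ps_step i x : i < r ->
  ps i x = if ps i.+1 x \in Vs i then cover (Vs i) else ps i.+1 x.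
Proof.
move=> ir; have [_ [U sV _ _ G]] := HB ir.
exact: (slice_porbit U sV G).
Qed.

Lemma ps_sub1 i x : i < r -> ps i.+1 x \subset ps i x.
Proof.
move=> ir; rewrite (ps_step x ir); case: ifP => // H.
exact: (bigcup_sup _ H).
Qed.

Lemma ps_sub i j x : i <= j <= r -> ps j x \subset ps i x.
Proof.
move=> /andP[ij jr]; elim: j ij jr => [|j IH] ij jr.
  by rewrite leqn0 in ij; rewrite (eqP ij).
case: (ltngtP i j.+1) ij => // [ij|<-] _; last exact: subxx.
exact: subset_trans (ps_sub1 x jr) (IH ij (ltnW jr)).
Qed.

Lemma ps_eq i x y : y \in ps i x -> ps i y = ps i x.
Proof. by move=> H; apply/eqP; rewrite eq_porbit_mem. Qed.

Lemma P_ps i u : u \in P i -> exists x, u = ps i x.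
Proof. by case/imsetP=> x _ ->; exists x. Qed.

Lemma ps_P i x : ps i x \in P i.
Proof. exact: imset_f. Qed.

Let L0 := init_labels r Vs.

Lemma L0_char x s : 1 <= s <= r -> L0 (ps r x) s = (ps s x \in Vs s.-1).
Proof.
move=> /andP[s1 sr]; rewrite /L0 /init_labels s1 sr /=.
have sr' : s.-1 < r by rewrite prednK.
have sV := HsV sr'; rewrite prednK // in sV.
apply/idP/idP => H.
  rewrite -(mem_cover_porbit _ sV); apply: (subsetP H); exact: porbit_id.
apply: subset_trans (ps_sub (i:=s) (j:=r) x _) _; first by rewrite sr leqnn.
exact: (bigcup_sup _ H).
Qed.

Lemma L0_out x s : ~~ (1 <= s <= r) -> L0 (ps r x) s = false.
Proof. by rewrite /L0 /init_labels => /negbTE ->. Qed.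


Definition G i : labeling n :=
  foldl (fun L j => red_step T j L) L0 (rev (iota i.+1 (r - i))).

Lemma G_r : G r = L0.
Proof. by rewrite /G subnn. Qed.

Lemma G_pred i : i < r -> G i = red_step T i.+1 (G i.+1).
Proof.
move=> ir; rewrite /G.
have -> : r - i = (r - i.+1).+1 by rewrite subnSK.
by rewrite -[iota _ _]/(i.+1 :: iota i.+2 (r - i.+1)) rev_cons foldl_rcons.
Qed.

Lemma G_col j s u : j <= s -> s <= r -> G j u s = G s u s.
Proof.
move=> js sr; have -> : j = s - (s - j) by lia.
have : s - j <= s by lia.
move: (s - j) => d; clear js; elim: d => [|d IH] ds; first by rewrite subn0.
have E : s - d.+1 < r by lia.
rewrite G_pred // /red_step.
have -> : (s < (s - d.+1).+1) = false by lia.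
by rewrite /= -IH ?(ltnW ds) //; congr (G _ u s); lia.
Qed.

Lemma G_mono j k s u : j <= k -> k <= r -> G j u s -> G k u s.
Proof.
move=> jk kr; have -> : j = k - (k - j) by lia.
have : k - j <= k by lia.
move: (k - j) => d; clear jk; elim: d => [|d IH] dk; first by rewrite subn0.
have E : k - d.+1 < r by lia.
rewrite G_pred // /red_step => H; apply: IH; first by lia.
have E2 : (k - d.+1).+1 = k - d by lia.
by move: H; rewrite E2; case: ifP.
Qed.

Definition Inv i := exists rep : {set 'I_n} -> {set 'I_n},
  (forall x, rep (ps i x) \in P r /\ rep (ps i x) \subset ps i x) /\
  (forall x s, s <= i -> G i (ps r x) s = (ps r x == rep (ps i x)) && L0 (ps r x) s).

Lemma Inv_r : Inv r.
Proof.
exists id; split; first by move=> x; rewrite ps_P subxx.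
by move=> x s _; rewrite G_r eqxx.
Qed.

Lemma Inv_step i : 1 <= i -> i < r -> Inv i.+1 -> Inv i.
Proof.
move=> i1 ir [rep [R1 R2]].
set W := cover (Vs i).
have Li1 : forall x, L0 (ps r x) i.+1 = (ps i.+1 x \in Vs i).
  by move=> x; rewrite L0_char //= ir.
set C := [set u in P r | G i.+1 u i.+1].
have [u0 u0C] : exists u0, u0 \in C.
  have /andP[_ c3] := Hcard ir.
  have /set0Pn[v vV] : Vs i != set0 by rewrite -card_gt0; apply: leq_trans c3.
  have [x0 Ev] := P_ps (subsetP (HsV ir) _ vV).
  have [Rp Rs] := R1 x0.
  have [y Ey] := P_ps Rp.
  have yv : y \in ps i.+1 x0 by apply: (subsetP Rs); rewrite Ey porbit_id.
  exists (ps r y); rewrite inE ps_P /= (R2 y _ (leqnn _)) (ps_eq yv) Li1 (ps_eq yv) -Ev vV andbT.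
  by rewrite Ev Ey.
set us := [arg min_(u < u0 in C) vkey T u].
have [usC usmin] : us \in C /\ forall u, u \in C -> vkey T us <= vkey T u.
  by rewrite /us; case: arg_minnP.
have UT := HU (leqnn r).
have Hmin : forall u, u \in C -> min_at T (G i.+1) i.+1 u = (u == us).
  move=> u uC; apply/idP/eqP.
    move/forall_inP => H.
    move: (usC) (uC); rewrite !inE => /andP[usP usG] /andP[uP _].
    have := H us usP; rewrite usG /= => le1.
    apply: (vkey_inj UT uP usP); apply/eqP; rewrite eqn_leq le1 usmin //.
  move->; apply/forall_inP => w wP; apply/implyP => Gw; apply: usmin.
  by rewrite inE wP Gw.
move: (usC); rewrite inE => /andP[/P_ps[ys Eys] Gys].
move: Gys; rewrite Eys (R2 ys _ (leqnn _)) Li1 => /andP[/eqP Erep ysV].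
have Hcase : forall x, ps i x = if ps i.+1 x \in Vs i then W else ps i.+1 x.
  by move=> x; apply: ps_step.
have HnW : forall x, ps i.+1 x \notin Vs i -> (ps i.+1 x == W) = false.
  move=> x xn; apply/negP => /eqP E; move/negP: xn; apply.
  rewrite -(mem_cover_porbit _ (HsV ir)) -/W -E; exact: porbit_id.
exists (fun w => if w == W then us else rep w); split.
  move=> x; rewrite Hcase; case xV: (ps i.+1 x \in Vs i); last by rewrite HnW ?xV //; exact: R1.
  rewrite eqxx; split; first by rewrite Eys ps_P.
  rewrite Eys; apply: subset_trans (ps_sub (i:=i.+1) (j:=r) ys _) _; first by rewrite ir leqnn.
  exact: (bigcup_sup _ ysV).
move=> x s si.
rewrite G_pred // /red_step (R2 x i.+1 (leqnn _)) (R2 x s (leqW si)) Li1 Hcase ltnS si /=.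
case xV: (ps i.+1 x \in Vs i).
  rewrite eqxx andbT.
  case: (eqVneq (ps r x) (rep (ps i.+1 x))) => [Eu|Neu].
    have uC : ps r x \in C by rewrite inE ps_P /= (R2 x i.+1 (leqnn _)) Li1 -Eu eqxx xV.
    rewrite Hmin //; by case: (ps r x == us).
  rewrite /=; symmetry; apply/andP => -[/eqP Eus _]; move/eqP: Neu; apply.
  have xys : x \in ps r ys by rewrite -Eys -Eus porbit_id.
  have xys' : x \in ps i.+1 ys.
    by apply: (subsetP (ps_sub (i:=i.+1) (j:=r) ys _)) => //; rewrite ir leqnn.
  by rewrite (ps_eq xys') Eus Eys Erep.
by rewrite HnW ?xV // andbF.
Qed.

Lemma Inv_all i : 1 <= i -> i <= r -> Inv i.
Proof.
move=> i1 ir; have -> : i = r - (r - i) by lia.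
have : r - i < r by lia.
move: (r - i) => d; elim: d => [|d IH] dr; first by rewrite subn0; exact: Inv_r.
have -> : r - d.+1 = (r - d.+1).+1.-1 by [].
apply: Inv_step; first by lia.
  by lia.
have -> : (r - d.+1).+1 = r - d by lia.
by apply: IH; lia.
Qed.

Lemma col_count s : 1 <= s <= r -> #|[set v in P r | G 1 v s]| = #|Vs s.-1|.
Proof.
move=> /andP[s1 sr].
have [rep [R1 R2]] := Inv_all s1 sr.
have sr' : s.-1 < r by rewrite prednK.
have sV := HsV sr'; rewrite prednK // in sV.
have -> : [set v in P r | G 1 v s] = rep @: Vs s.-1.
  apply/setP => v; rewrite inE; apply/andP/imsetP.
    move=> [/P_ps[x ->]]; rewrite G_col // R2 // => /andP[/eqP E L].
    exists (ps s x) => //; by rewrite -(L0_char x) ?s1.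
  move=> [w wV ->].
  have [x0 Ew] := P_ps (subsetP sV _ wV).
  have [Rp Rs] := R1 x0.
  have [y Ey] := P_ps Rp.
  have yw : y \in ps s x0 by apply: (subsetP Rs); rewrite Ey porbit_id.
  split; first by rewrite Ew.
  rewrite Ew Ey G_col // R2 // (ps_eq yw) Ey eqxx L0_char ?s1 //= (ps_eq yw) -Ew.
  done.
apply: card_in_imset => w1 w2 w1V w2V E.
have [x1 E1] := P_ps (subsetP sV _ w1V).
have [x2 E2] := P_ps (subsetP sV _ w2V).
have [Rp1 Rs1] := R1 x1.
have [_ Rs2] := R1 x2.
have [y Ey] := P_ps Rp1.
have y1 : y \in ps s x1 by apply: (subsetP Rs1); rewrite Ey porbit_id.
have y2 : y \in ps s x2 by apply: (subsetP Rs2); rewrite -E2 -E E1 Ey porbit_id.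
by rewrite E1 E2 -(ps_eq y1) -(ps_eq y2).
Qed.

Lemma min_at_ext (L L' : labeling n) i v : (forall w, L w i = L' w i) ->
  min_at T L i v = min_at T L' i v.
Proof. by move=> H; apply: eq_forallb => w; rewrite H. Qed.

Lemma iii_b s i v : 1 <= s -> s < i -> i <= r ->
  G 1 v s -> G 1 v i -> min_at T (G 1) i v.
Proof.
move=> s1 si ir G1s G1i.
have i1 : i.-1 < r by lia.
have Gm : G i.-1 v s by apply: (G_mono _ _ G1s); lia.
have Gi : G i v i by rewrite -(@G_col 1) //; lia.
move: Gm; rewrite G_pred // prednK; last by lia.
rewrite /red_step si Gi /=.
case: ifP => // H _.
rewrite (min_at_ext (L' := G i)); first by move: H; case: (min_at _ _ _ _).
by move=> w; rewrite G_col //; lia.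
Qed.

Lemma iii_a s i : 1 <= s -> s < i -> i <= r ->
  #|[set v in P r | G 1 v s && G 1 v i]| <= 1.
Proof.
move=> s1 si ir; apply/card_le1_eqP => u v; rewrite !inE.
move=> /andP[uP /andP[us ui]] /andP[vP /andP[vs vi]].
have := iii_b s1 si ir us ui; have := iii_b s1 si ir vs vi.
move=> /forall_inP Hv /forall_inP Hu.
apply: (vkey_inj (HU (leqnn r)) vP uP); apply/eqP; rewrite eqn_leq.
by move: (Hu v vP) (Hv u uP); rewrite vi ui /= => -> ->.
Qed.

Lemma sum_cols :
  \sum_(v in P r) \sum_(1 <= s < r.+1) (G 1 v s : nat) = \sum_(i < r) #|Vs i|.
Proof.
rewrite exchange_big /=.
rewrite big_add1 /= big_mkord; apply: eq_bigr => i _.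
rewrite (_ : #|Vs i| = #|Vs i.+1.-1|) // -col_count /=; last by rewrite ltn_ord.
rewrite -sum1_card [RHS]big_mkcond [LHS]big_mkcond; apply: eq_bigr => v _.
by rewrite inE; case: (v \in P r); case: (G 1 v i.+1).
Qed.

Lemma genus_sum m : m <= r ->
  \sum_(0 <= i < m) #|Vs i| + 2 * genus (Ms m) = 2 * genus (Ms 0) + m /\
  m + genus (Ms m) <= genus (Ms 0).
Proof.
elim: m => [|m IH] mr; first by rewrite big_geq // add0n addn0 add0n.
have [IH1 IH2] := IH (ltnW mr).
have := Hgen mr; have /andP[od c3] := Hcard mr.
set c := #|Vs m|; set k := c.-1./2 => Hg.
have Ec : c = k.*2.+1.
  have E1 := odd_double_half c; rewrite od in E1.
  have Ek : k = c./2 by rewrite /k -{1}E1 add1n /= doubleK.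
  by rewrite Ek -{1}E1 add1n.
rewrite big_nat_recr //= -/c; rewrite -mul2n in Ec; rewrite -/c in c3; clearbody k c; set S := \sum_(0 <= i < m) _ in IH1 *; clearbody S; move: (genus (Ms 0)) (genus (Ms m)) (genus (Ms m.+1)) IH1 IH2 Hg => g0 g1 g2 *; split; lia.
Qed.

Lemma induced_G : induced_labels T r Vs = G 1.
Proof. by rewrite /G subn1. Qed.

Lemma main_sec g : 1 <= g -> genus (Ms 0) = g -> genus (Ms r) = 0 ->
  (1 <= r <= g) /\ lambda_tree g r (Ms r) (induced_labels (Ms r) r Vs).
Proof.
move=> g1 Eg Er.
have [GS GL] := genus_sum (leqnn r).
have r1 : 0 < r.
  rewrite lt0n; apply/eqP => r0; move: Er Eg; rewrite r0 => ->; lia.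
have rg : r <= g by lia.
have rr : (0 < r <= g) by rewrite r1 rg.
split => //.
rewrite induced_G; split => //.
- split; [exact: HU (leqnn r) | exact: Er].
- rewrite sum_cols -(big_mkord xpredT (fun i => #|Vs i|)); rewrite Er Eg in GS; lia.
- move=> s /andP[s1 sr]; rewrite col_count ?s1 //.
  have sr' : s.-1 < r by rewrite prednK.
  by have /andP[] := Hcard sr'.
move=> s i s1 si ir; split; first exact: iii_a.
by move=> v _; exact: iii_b.
Qed.

End D.

Theorem lemma1 (n g r : nat) (M : umap n) (Ms : nat -> umap n)
    (ts : nat -> 'I_n) (Vs : nat -> {set {set 'I_n}}) :
  1 <= g -> is_umap M -> genus M = g -> blueprint M r Ms ts Vs ->
  (1 <= r <= g) /\ lambda_tree g r (Ms r) (induced_labels (Ms r) r Vs).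
Proof.
move=> g1 UM Eg [E0 HB Er].
subst M.
exact: (main_sec UM HB g1 Eg Er).
Qed.
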